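(* Let $M$ be a $\pi$-projective right $R$-module. The following are equivalent: (a) $M$ is principally lifting; (b) $M$ is principally Goldie*-lifting; (c) $M$ is $\oplus$-principally supplemented.
   Context: $R$ is an associative ring with identity; modules are unital right $R$-modules. $M$ is $\pi$-projective if for all submodules $U,V$ with $U+V=M$ there exists $f\in\mathrm{End}(M)$ with $f(M)\subseteq U$ and $(1-f)(M)\subseteq V$. $K\ll N$ means $K$ is small in $N$. For submodules $X,Y$ of $M$, $X\,\beta^*\,Y$ means $(X+Y)/X\ll M/X$ and $(X+Y)/Y\ll M/Y$. $M$ is principally Goldie*-lifting if for every cyclic submodule $X$ there is a direct summand $D$ of $M$ with $X\,\beta^*\,D$. $M$ is principally lifting if for every cyclic submodule $X$ there is a decomposition $M=D\oplus D'$ with $D\subseteq X$ and $D'\cap X\ll M$. $M$ is $\oplus$-principally supplemented if for every cyclic submodule $X$ there is a direct summand $D$ of $M$ with $M=D+X$ and $D\cap X\ll D$. *)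

(* Defs.v *)
(* Right R-modules are modelled as left modules over the
   converse ring R^c: for m : M and r : R, the right action m r is r *: m
   (with r : R^c). *)
From HB Require Import structures.
From mathcomp Require Import all_boot all_order all_algebra.
Set Implicit Arguments. Unset Strict Implicit. Unset Printing Implicit Defensive.
Import GRing.Theory.
Local Open Scope ring_scope.

Section ModDefs.
Variable R : pzRingType.
Variable M : lmodType R^c.

Definition mset := M -> Prop.

Definition submod (U : mset) : Prop :=
  U 0 /\ (forall x y, U x -> U y -> U (x + y)) /\
  (forall (r : R^c) x, U x -> U (r *: x)).

Definition msub (U V : mset) : Prop := forall x, U x -> V x.
Definition mfull (U : mset) : Prop := forall x : M, U x.
Definition mtop : mset := fun _ => True.
Definition madd (U V : mset) : mset := fun x => exists u v, U u /\ V v /\ x = u + v.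
Definition mcap (U V : mset) : mset := fun x => U x /\ V x.

Definition cyclic_sub (m : M) : mset := fun x => exists r : R^c, x = r *: m.

Definition small (K N : mset) : Prop :=
  msub K N /\
  forall L, submod L -> msub L N -> msub N (madd K L) -> msub N L.

(* S/X << M/X, for submodules X <= S, via the correspondence theorem:
   submodules of M/X are L/X with X <= L <= M, and S/X + L/X = M/X iff S + L = M. *)
Definition small_mod (S X : mset) : Prop :=
  forall L, submod L -> msub X L -> mfull (madd S L) -> mfull L.

Definition beta_star (X Y : mset) : Prop :=
  small_mod (madd X Y) X /\ small_mod (madd X Y) Y.

Definition direct_decomp (D D' : mset) : Prop :=
  submod D /\ submod D' /\ mfull (madd D D') /\ (forall x, D x -> D' x -> x = 0).

Definition direct_summand (D : mset) : Prop := exists D', direct_decomp D D'.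

Definition pi_projective : Prop :=
  forall U V : mset, submod U -> submod V -> mfull (madd U V) ->
  exists f : {linear M -> M}, (forall x, U (f x)) /\ (forall x, V (x - f x)).

Definition principally_lifting : Prop :=
  forall m : M, exists D D', direct_decomp D D' /\ msub D (cyclic_sub m) /\
    small (mcap D' (cyclic_sub m)) mtop.

Definition principally_goldie_star_lifting : Prop :=
  forall m : M, exists D, direct_summand D /\ beta_star (cyclic_sub m) D.

Definition oplus_principally_supplemented : Prop :=
  forall m : M, exists D, direct_summand D /\ mfull (madd D (cyclic_sub m)) /\
    small (mcap D (cyclic_sub m)) D.

End ModDefs.

(* Main.v *)
Require Import Defs.
From mathcomp Require Import all_boot all_order all_algebra.
Set Implicit Arguments. Unset Strict Implicit. Unset Printing Implicit Defensive.
Import GRing.Theory.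
Local Open Scope ring_scope.

Section Aux.
Variable R : pzRingType.
Variable M : lmodType R^c.
Implicit Types U V D K L : mset M.

Lemma smN U x : submod U -> U x -> U (- x).
Proof. move=> [h0 [hD hZ]] Ux; rewrite -scaleN1r; exact: hZ. Qed.

Lemma smB U x y : submod U -> U x -> U y -> U (x - y).
Proof. move=> hU Ux Uy; have [_ [hD _]] := hU; apply: hD => //; exact: smN. Qed.

Lemma smD U x y : submod U -> U x -> U y -> U (x + y).
Proof. by move=> [_ [hD _]]; apply: hD. Qed.

Lemma sm0 U : submod U -> U 0.
Proof. by case. Qed.

Lemma submod_madd U V : submod U -> submod V -> submod (madd U V).
Proof.
move=> hU hV; split; first by exists 0, 0; rewrite addr0; split; [exact: sm0|split; [exact: sm0|]].
split.
  move=> x y [u [v [Uu [Vv ->]]]] [u' [v' [Uu' [Vv' ->]]]].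
  exists (u + u'), (v + v'); split; [exact: smD|split; [exact: smD|]].
  by rewrite addrACA.
move=> r x [u [v [Uu [Vv ->]]]]; exists (r *: u), (r *: v); rewrite scalerDr.
have [_ [_ hZ]] := hU; have [_ [_ hZ']] := hV; split; [exact: hZ|split; [exact: hZ'|done]].
Qed.

Lemma submod_mcap U V : submod U -> submod V -> submod (mcap U V).
Proof.
move=> hU hV; split; first by split; exact: sm0.
split; first by move=> x y [? ?] [? ?]; split; exact: smD.
move=> r x [? ?]; have [_ [_ hZ]] := hU; have [_ [_ hZ']] := hV; split; [exact: hZ|exact: hZ'].
Qed.

Lemma submod_cyclic (m : M) : submod (cyclic_sub m).
Proof.
split; first by exists 0; rewrite scale0r.
split; first by move=> x y [r ->] [s ->]; exists (r + s); rewrite scalerDl.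
by move=> r x [s ->]; exists (r * s); rewrite scalerA.
Qed.

Lemma small_top D K : submod D -> small K D -> small K (@mtop _ M).
Proof.
move=> hD [KD hs]; split => // L hL _ hcov x _.
have DL : msub D L.
  move=> d Dd.
  have: mcap D L d.
    apply: (hs (mcap D L)) => //; first exact: submod_mcap.
      by move=> y [].
    move=> y Dy; have [k [l [Kk [Ll ey]]]] := hcov y I; rewrite ey in Dy *.
    exists k, l; split => //; split => //; split => //.
    have -> : l = (k + l) - k by rewrite addrC addKr.
    exact: smB hD Dy (KD _ Kk).
  by case.
have [k [l [Kk [Ll ->]]]] := hcov x I.
exact: smD (DL _ (KD _ Kk)) Ll.
Qed.

Lemma dd_sym D D' : direct_decomp D D' -> direct_decomp D' D.
Proof.
move=> [h1 [h2 [h3 h4]]]; split => //; split => //; split; last by move=> x a b; exact: h4.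
move=> x; have [u [v [Uu [Vv ->]]]] := h3 x; exists v, u; split => //; split => //; exact: addrC.
Qed.

End Aux.

Theorem proposition3p16 (R : pzRingType) (M : lmodType R^c) :
  pi_projective M ->
  (principally_lifting M <-> principally_goldie_star_lifting M) /\
  (principally_goldie_star_lifting M <-> oplus_principally_supplemented M).
Proof.
move=> hpi.
have ab : principally_lifting M -> principally_goldie_star_lifting M.
  move=> hPL m; have [D [D' [hdd [DmR hsm]]]] := hPL m.
  have hC := submod_cyclic m.
  have [hD [hD' [hfull hint]]] := hdd.
  exists D; split; first by exists D'.
  split.
    move=> L hL mRL hf x; have [y [l [[a [d [Aa [Dd ->]]]] [Ll ->]]]] := hf x.
    by refine (smD hL (smD hL _ _) Ll); [exact: mRL|exact: mRL (DmR _ Dd)].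
  move=> L hL DL hf.
  have [_ hs] := hsm.
  suff HL : msub (@mtop _ M) L by move=> x; exact: HL.
  apply: (hs L hL) => // x _.
  have [y [l [[a [d [Aa [Dd ->]]]] [Ll ->]]]] := hf x.
  have [d1 [d1' [Dd1 [Dd1' ea]]]] := hfull a.
  exists d1', (d1 + d + l); split.
    split => //; have -> : d1' = a - d1 by rewrite ea addrC addKr.
    exact: smB hC Aa (DmR _ Dd1).
  split; first by refine (smD hL (smD hL _ _) Ll); apply: DL.
  by rewrite ea !addrA [d1' + d1]addrC.
have bc : principally_goldie_star_lifting M -> oplus_principally_supplemented M.
  move=> hG m; have [D [[D' hdd] [hb1 hb2]]] := hG m.
  have hC := submod_cyclic m.
  have [hD [hD' [hfull hint]]] := hdd.
  have mfull' : mfull (madd (cyclic_sub m) D').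
    apply: hb1; first exact: submod_madd.
      by move=> a Aa; exists a, 0; rewrite addr0; split => //; split => //; exact: sm0.
    move=> x; have [d [d' [Dd [Dd' ->]]]] := hfull x.
    exists (0 + d), (0 + d'); split.
      by exists 0, d; split; [exact: sm0|split].
    split; last by rewrite !add0r.
    by exists 0, d'; split; [exact: sm0|split].
  exists D'; split; first by exists D; exact: dd_sym.
  split.
    move=> x; have [a [d' [Aa [Dd' ->]]]] := mfull' x.
    by exists d', a; split => //; split => //; exact: addrC.
  split; first by move=> x [].
  move=> L hL LD' hcov.
  have fDL : mfull (madd D L).
    apply: hb2; first exact: submod_madd.
      by move=> d Dd; exists d, 0; rewrite addr0; split => //; split => //; exact: sm0.
    move=> x; have [a [d' [Aa [Dd' ->]]]] := mfull' x.
    have [k [l [[Dk Ak] [Ll ->]]]] := hcov d' Dd'.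
    exists (a + k + 0), (0 + l); split.
      by exists (a + k), 0; split; [exact: smD|split; [exact: sm0|]].
    split; last by rewrite addr0 add0r addrA.
    by exists 0, l; split => //; exact: sm0.
  move=> x Dx; have [d [l [Dd [Ll ex]]]] := fDL x.
  have d0 : d = 0.
    apply: hint => //; have -> : d = x - l by rewrite ex addrK.
    exact: smB hD' Dx (LD' _ Ll).
  by rewrite ex d0 add0r.
have ca : oplus_principally_supplemented M -> principally_lifting M.
  move=> hS m; have [D [[D'' hdd] [hfull' hsm]]] := hS m.
  have hC := submod_cyclic m.
  have [hD [hD'' [hfull hint]]] := hdd.
  have [f [fU fV]] : exists f : {linear M -> M},
      (forall x, cyclic_sub m (f x)) /\ (forall x, D (x - f x)).
    apply: hpi => // x; have [d [a [Dd [Aa ->]]]] := hfull' x.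
    by exists a, d; split => //; split => //; exact: addrC.
  exists (fun y => exists z, D'' z /\ y = f z), D.
  split; last first.
    split; first by move=> y [z [_ ->]].
    apply: small_top hD _.
    have [hK hs] := hsm; split => //.
  split.
    split; first by exists 0; rewrite linear0; split => //; exact: sm0.
    split.
      by move=> x y [z [Dz ->]] [z' [Dz' ->]]; exists (z + z'); rewrite linearD; split => //; exact: smD.
    by move=> r x [z [Dz ->]]; exists (r *: z); rewrite linearZ; split => //; have [_ [_ hZ]] := hD''; exact: hZ.
  split => //; split.
    move=> x; have [d [y [Dd [Dy ->]]]] := hfull x.
    exists (f y), (d + (y - f y)); split; first by exists y.
    split; first exact: smD.
    by rewrite addrCA subrKC.
  move=> x [z [Dz ->]] Dfz.
  have z0 : z = 0.
    apply: hint => //; have -> : z = (z - f z) + f z by rewrite subrK.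
    exact: smD hD (fV z) Dfz.
  by rewrite z0 linear0.
split; split.
- exact: ab.
- move=> h; exact: ca (bc h).
- exact: bc.
- move=> h; exact: ab (ca h).
Qed.
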